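(* Consider NSGA-III (as described in the context) with population size $\mu \ge n+1$ and $\mu = \mathrm{poly}(n)$, nadir threshold $\varepsilon_{\mathrm{nad}} \ge n$ and reference-point parameter $p \ge 4\sqrt{2}\,n$, maximizing $2$-OMM on $\{0,1\}^n$, and let $c>0$ be a constant. Then, with probability $1-o(1)$, after $cn/\ln(n)$ generations there is no $y \in P_t$ with $|y|_1 \ge 3n/4$.
   Context: For $x\in\{0,1\}^n$ let $|x|_1$ be its number of ones and $|x|_0 = n-|x|_1$ its number of zeros. The bi-objective function $2$-OMM$\colon \{0,1\}^n\to\mathbb{N}_0^2$ is $x\mapsto (|x|_1,|x|_0)$, to be maximized. NSGA-III with population size $\mu$ works as follows. $P_0$ consists of $\mu$ independent uniformly random bit strings. In generation $t$, an offspring multiset $Q_t$ of $\mu$ individuals is created, each by choosing a parent uniformly at random from $P_t$ and flipping each bit independently with probability $1/n$. $R_t=P_t\cup Q_t$ is partitioned by non-dominated sorting into fronts $F^1_t,F^2_t,\dots$ ($F^1_t$ the non-dominated individuals, $F^i_t$ those dominated only by individuals of earlier fronts); let $i^*$ be minimal with $\sum_{i\le i^*}|F^i_t|\ge\mu$; all individuals of $F^1_t,\dots,F^{i^*-1}_t$ survive and the rest are selected from $F^{i^*}_t$ as follows. Objectives are normalized as $f^n_j(x)=(f_j(x)-y_j^{\min})/(y_j^{\mathrm{nad}}-y_j^{\min})$, where $y^{\min}_j$ is the minimum value of objective $j$ seen so far and the nadir point $y^{\mathrm{nad}}$ is computed by the procedure of Wietheger and Doerr (2023), satisfying $y^{\mathrm{nad}}_j\ge\varepsilon_{\mathrm{nad}}$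 for a user threshold $\varepsilon_{\mathrm{nad}}>0$. The reference points are $\mathcal{R}_p=\{(a_1/p,\dots,a_m/p): a_i\in\mathbb{N}_0,\sum a_i=p\}$ ($m$ the number of objectives). Each individual is associated with the reference point $r$ minimizing the distance from its normalized vector to the line through the origin and $r$. Then repeatedly a reference point $r$ with the fewest already selected associated individuals (counting the individuals of earlier fronts; ties broken uniformly at random) is chosen; among the not-yet-selected individuals of $F^{i^*}_t$ associated with $r$, one whose normalized vector is closest to $r$ is selected (ties broken at random); if none exists, $r$ is discarded; this stops when $\mu$ individuals are selected in total, giving $P_{t+1}$. Asymptotic notation refers to $n\to\infty$. *)

(* Defs.v *)
From HB Require Import structures.
From mathcomp Require Import all_boot all_order all_algebra.
From mathcomp Require Import reals exp.
Set Implicit Arguments. Unset Strict Implicit. Unset Printing Implicit Defensive.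
Import Order.TTheory GRing.Theory Num.Theory.
Local Open Scope ring_scope.

Section Dist.
Variable R : realType.

Definition dist (T : Type) := seq (T * R).
Definition dret T (x : T) : dist T := [:: (x, 1)].
Definition dbind T U (d : dist T) (f : T -> dist U) : dist U :=
  flatten [seq [seq (y.1, x.2 * y.2) | y <- f x.1] | x <- d].
(* uniform distribution over the entries of s (multiset semantics) *)
Definition dunif T (s : seq T) : dist T := [seq (x, (size s)%:R^-1) | x <- s].
Definition dflip (q : R) : dist bool := [:: (true, q); (false, 1 - q)].
Fixpoint diid T (k : nat) (d : dist T) : dist (seq T) :=
  match k with
  | 0 => dret [::]
  | k'.+1 => dbind d (fun x => dbind (diid k' d) (fun s => dret (x :: s)))
  end.
Definition dprob T (d : dist T) (E : T -> bool) : R :=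
  \sum_(x <- d) (if E x.1 then x.2 else 0).

Definition bitstr := seq bool.
Definition ones (x : bitstr) : nat := count id x.
Definition zeros (x : bitstr) : nat := count negb x.
Definition omm2 (x : bitstr) : nat * nat := (ones x, zeros x).

Fixpoint flipbits (q : R) (x : bitstr) : dist bitstr :=
  match x with
  | [::] => dret [::]
  | b :: x' => dbind (dflip q) (fun fl =>
                 dbind (flipbits q x') (fun y => dret (addb b fl :: y)))
  end.
Definition mutate (n : nat) (x : bitstr) : dist bitstr := flipbits (n%:R^-1) x.
Definition unif_bitstr (n : nat) : dist bitstr := flipbits (2^-1) (nseq n false).

(** * Non-dominated sorting (maximization); individuals are indices into R_t *)
Definition dominates (u v : nat * nat) : bool :=
  [&& (v.1 <= u.1)%N, (v.2 <= u.2)%N & (v.1 < u.1)%N || (v.2 < u.2)%N].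

Definition nondom (Rt : seq bitstr) (S : seq nat) : seq nat :=
  [seq i <- S | ~~ has (fun j => dominates (omm2 (nth [::] Rt j)) (omm2 (nth [::] Rt i))) S].

Fixpoint fronts_aux (Rt : seq bitstr) (fuel : nat) (S : seq nat) : seq (seq nat) :=
  match fuel with
  | 0 => [::]
  | fuel'.+1 =>
      if S is [::] then [::] else
      let F := nondom Rt S in F :: fronts_aux Rt fuel' [seq i <- S | i \notin F]
  end.
Definition fronts (Rt : seq bitstr) : seq (seq nat) :=
  fronts_aux Rt (size Rt) (iota 0 (size Rt)).

(* (F^1 ++ ... ++ F^(istar-1), F^istar) with istar minimal such that the first istar
   fronts contain at least mu individuals *)
Fixpoint split_fronts (mu : nat) (Fs : seq (seq nat)) : seq nat * seq nat :=
  match Fs with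
  | [::] => ([::], [::])
  | F :: Fs' => if (mu <= size F)%N then ([::], F)
                else let AB := split_fronts (mu - size F) Fs' in (F ++ AB.1, AB.2)
  end.

Definition vec := (R * R)%type.
Definition dotv (u v : vec) : R := u.1 * v.1 + u.2 * v.2.

Definition minseq (s : seq nat) : nat := foldr minn (head 0%N s) s.

Definition ymin (hist : seq (seq bitstr)) : vec :=
  let all := flatten hist in
  ((minseq [seq ones x | x <- all])%:R, (minseq [seq zeros x | x <- all])%:R).

Definition normalize (ymn ynad : vec) (x : bitstr) : vec :=
  (((ones x)%:R - ymn.1) / (ynad.1 - ymn.1), ((zeros x)%:R - ymn.2) / (ynad.2 - ymn.2)).

(* reference point number a of R_p (m = 2): (a/p, (p-a)/p), a = 0..p *)
Definition refpt (p a : nat) : vec := (a%:R / p%:R, (p - a)%:R / p%:R).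

(* squared distance from v to the line through the origin and r *)
Definition dist2_line (v r : vec) : R :=
  let s := dotv v r / dotv r r in
  let w := (v.1 - s * r.1, v.2 - s * r.2) in dotv w w.

Definition dist2_pt (v r : vec) : R :=
  let w := (v.1 - r.1, v.2 - r.2) in dotv w w.

(* the reference point minimizing the distance to its line
   (ties: the one with smallest index) *)
Definition assoc (p : nat) (v : vec) : nat :=
  foldl (fun best a => if dist2_line v (refpt p a) < dist2_line v (refpt p best)
                       then a else best) 0%N (iota 1 p).

Definition minR (s : seq R) : R := foldr Num.min (head 0 s) s.

Section Niching.
Variables (mu p : nat) (fn : nat -> vec) (before Fstar : seq nat).
(* fn i = normalized objective vector of individual i of R_t *)
Let asc (i : nat) : nat := assoc p (fn i).

Fixpoint niche (fuel : nat) (act : seq nat) (sel : seq nat) : dist (seq nat) :=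
  match fuel with
  | 0 => dret sel
  | fuel'.+1 =>
    if (mu <= size before + size sel)%N then dret sel else
    if act is [::] then dret sel else
    let rho a := count (fun i => asc i == a) (before ++ sel) in
    let m := minseq (map rho act) in
    let cands := [seq a <- act | rho a == m] in
    dbind (dunif cands) (fun a =>
      let C := [seq i <- Fstar | (i \notin sel) && (asc i == a)] in
      if C is [::] then niche fuel' (rem a act) sel else
      let dm := minR [seq dist2_pt (fn i) (refpt p a) | i <- C] in
      let C' := [seq i <- C | dist2_pt (fn i) (refpt p a) == dm] in
      dbind (dunif C') (fun i => niche fuel' act (rcons sel i)))
  end.
End Niching.

Section NSGA3.
Variables (n mu p : nat) (nad : seq (seq bitstr) -> vec).
(* nad hist = nadir point y^nad computed from the history [R_0; ...; R_t] *)

Definition survival (hist : seq (seq bitstr)) (Rt : seq bitstr) : dist (seq bitstr) :=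
  let hist' := rcons hist Rt in
  let fn i := normalize (ymin hist') (nad hist') (nth [::] Rt i) in
  let BF := split_fronts mu (fronts Rt) in
  dbind (niche mu p fn BF.1 BF.2 (p.+1 + size BF.2).+1 (iota 0 p.+1) [::])
        (fun sel => dret [seq nth [::] Rt i | i <- BF.1 ++ sel]).

(* returns (R_t, P_(t+1)) *)
Definition generation (hist : seq (seq bitstr)) (P : seq bitstr)
  : dist (seq bitstr * seq bitstr) :=
  dbind (diid mu (dbind (dunif P) (mutate n))) (fun Q =>
  let Rt := P ++ Q in
  dbind (survival hist Rt) (fun P' => dret (Rt, P'))).

Fixpoint run_aux (T : nat) (hist : seq (seq bitstr)) (P : seq bitstr)
  : dist (seq (seq bitstr)) :=
  match T with
  | 0 => dret [::]
  | T'.+1 => dbind (generation hist P) (fun RP =>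
               dbind (run_aux T' (rcons hist RP.1) RP.2) (fun tr => dret (RP.2 :: tr)))
  end.

(* distribution of the trajectory [P_0; P_1; ...; P_T] *)
Definition nsga3_run (T : nat) : dist (seq (seq bitstr)) :=
  dbind (diid mu (unif_bitstr n)) (fun P0 =>
  dbind (run_aux T [::] P0) (fun tr => dret (P0 :: tr))).
End NSGA3.

Definition no_high (n : nat) (tr : seq (seq bitstr)) : bool :=
  all (fun P => all (fun y => (4 * ones y < 3 * n)%N) P) tr.

End Dist.

(* Main.v *)
Require Import Defs.
From HB Require Import structures.
From mathcomp Require Import all_boot all_order all_algebra.
From mathcomp Require Import reals exp.
From mathcomp Require Import sequences.
From mathcomp Require Import ring lra zify.
Import Order.TTheory GRing.Theory Num.Theory.
Local Open Scope ring_scope.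
Set Implicit Arguments. Unset Strict Implicit. Unset Printing Implicit Defensive.

Section Gen.
Variable R : realType.
Definition dexp T (d : dist R T) (g : T -> R) : R := \sum_(x <- d) x.2 * g x.1.
Definition mass T (d : dist R T) : R := \sum_(x <- d) x.2.
Definition dall T (d : dist R T) (P : T -> bool) := all (fun x => P x.1) d.
Definition nneg T (d : dist R T) := all (fun x : T * R => 0 <= x.2) d.

Lemma massE T (d : dist R T) : mass d = dexp d (fun _ => 1).
Proof. by apply: eq_bigr => x _; rewrite mulr1. Qed.

Lemma dexp_bind T U (d : dist R T) (f : T -> dist R U) g :
  dexp (dbind d f) g = dexp d (fun x => dexp (f x) g).
Proof.
elim: d => [|x d IH]; first by rewrite /dexp /dbind !big_nil.
rewrite /dbind /= /dexp big_cat /= big_cons.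
congr (_ + _); last exact: IH.
rewrite big_map mulr_sumr; apply: eq_bigr => y _ /=; by rewrite mulrA.
Qed.

Lemma dexp_ret T (x : T) g : dexp (dret R x) g = g x.
Proof. by rewrite /dexp big_cons big_nil /= mul1r addr0. Qed.

Lemma dprobE T (d : dist R T) E : dprob d E = dexp d (fun x => if E x then 1 else 0).
Proof. by apply: eq_bigr => x _; case: (E x.1); rewrite ?mulr1 ?mulr0. Qed.

Lemma dexp_le T (d : dist R T) g h : nneg d -> dall d (fun x => g x <= h x) ->
  dexp d g <= dexp d h.
Proof.
elim: d => [|x d IH] /=; first by rewrite /dexp !big_nil.
move=> /andP[x0 n0] /andP[gh a]; rewrite /dexp !big_cons lerD ?IH //.
by rewrite ler_wpM2l.
Qed.

Lemma dexp_add T (d : dist R T) g h :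
  dexp d (fun x => g x + h x) = dexp d g + dexp d h.
Proof. by rewrite /dexp -big_split; apply: eq_bigr => x _; rewrite mulrDr. Qed.

Lemma dexp_scale T (d : dist R T) g k :
  dexp d (fun x => k * g x) = k * dexp d g.
Proof. by rewrite /dexp mulr_sumr; apply: eq_bigr => x _; rewrite mulrCA. Qed.

Lemma dexp_const T (d : dist R T) k : dexp d (fun _ => k) = k * mass d.
Proof. by rewrite massE -dexp_scale; apply: eq_bigr => x _; rewrite mulr1. Qed.

Lemma dexp_ge0 T (d : dist R T) g : nneg d -> dall d (fun x => 0 <= g x) -> 0 <= dexp d g.
Proof.
move=> n a; have := dexp_le n a; rewrite (_ : dexp d (fun _ => 0) = 0) //.
by rewrite dexp_const mul0r.
Qed.

Lemma dall_bind T U (d : dist R T) (f : T -> dist R U) P :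
  dall d (fun x => dall (f x) P) -> dall (dbind d f) P.
Proof.
elim: d => [|x d IH] //= /andP[a1 a2].
rewrite /dall /dbind /= all_cat -/(dbind d f); apply/andP; split; last exact: IH.
by rewrite all_map; apply: sub_all a1 => y.
Qed.

Lemma nneg_bind T U (d : dist R T) (f : T -> dist R U) :
  nneg d -> dall d (fun x => nneg (f x)) -> nneg (dbind d f).
Proof.
elim: d => [|x d IH] //= /andP[x0 n0] /andP[a1 a2].
rewrite /nneg /dbind /= all_cat -/(dbind d f); apply/andP; split; last exact: IH.
rewrite all_map; apply: sub_all a1 => y /= y0; exact: mulr_ge0.
Qed.

Lemma dall_impl T (d : dist R T) (P Q : T -> bool) :
  dall d P -> (forall x, P x -> Q x) -> dall d Q.
Proof. by move=> a H; apply: sub_all a => x /H. Qed.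

Lemma dall_ret T (x : T) (P : T -> bool) : P x -> dall (dret R x) P.
Proof. by rewrite /dall /= => ->. Qed.

Lemma nneg_ret T (x : T) : nneg (dret R x).
Proof. by rewrite /nneg /= ler01. Qed.

Lemma mass_ret T (x : T) : mass (dret R x) = 1.
Proof. by rewrite massE dexp_ret. Qed.

Lemma mass_bind T U (d : dist R T) (f : T -> dist R U) :
  mass (dbind d f) = dexp d (fun x => mass (f x)).
Proof. by rewrite massE dexp_bind; apply: eq_bigr => x _; rewrite -massE. Qed.

Lemma mass_bind1 T U (d : dist R T) (f : T -> dist R U) :
  mass d = 1 -> dall d (fun x => mass (f x) == 1) -> mass (dbind d f) = 1.
Proof.
move=> m a; rewrite mass_bind -m.
elim: d a {m} => [|x d IH]; first by rewrite /dexp /mass !big_nil.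
rewrite /dall /= => /andP[/eqP h a]; rewrite {1}/dexp big_cons h mulr1 /mass big_cons.
by congr (_ + _); apply: IH.
Qed.

Lemma dexp_unif T (s : seq T) g : dexp (dunif R s) g = (size s)%:R^-1 * \sum_(x <- s) g x.
Proof. by rewrite /dexp big_map mulr_sumr. Qed.

Lemma mass_unif T (s : seq T) : (0 < size s)%N -> mass (dunif R s) = 1.
Proof.
move=> s0; rewrite massE dexp_unif big_const_seq count_predT.
rewrite -[X in _ * X]/((iter (size s) (fun x => 1 + x) 0)).
have -> : iter (size s) (fun x : R => 1 + x) 0 = (size s)%:R.
  by elim: (size s) => //= k ->; rewrite -addn1 natrD addrC.
by rewrite mulVf // pnatr_eq0 -lt0n.
Qed.

Lemma nneg_unif T (s : seq T) : nneg (dunif R s).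
Proof. rewrite /nneg all_map; apply: sub_all (all_predT s) => x _ /=; by rewrite invr_ge0 ler0n. Qed.

Lemma dall_unif T (s : seq T) P : all P s -> dall (dunif R s) P.
Proof. by rewrite /dall all_map. Qed.

End Gen.

Section Flip.
Variable R : realType.

Lemma dall_all T (d : dist R T) (P : T -> bool) : (forall x, P x) -> dall d P.
Proof. by move=> H; apply: sub_all (all_predT d) => x _; apply: H. Qed.

Lemma dexp_flip (q : R) g : dexp (dflip q) g = q * g true + (1 - q) * g false.
Proof. by rewrite /dexp !big_cons big_nil addr0. Qed.

Lemma mass_flip1 (q : R) : mass (dflip q) = 1.
Proof. by rewrite massE dexp_flip !mulr1 addrC subrK. Qed.

Lemma nneg_flip1 (q : R) : 0 <= q <= 1 -> nneg (dflip q).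
Proof. by case/andP=> q0 q1; rewrite /nneg /= q0 subr_ge0 q1. Qed.

Lemma flipbits_cons (q : R) b (x : bitstr) : flipbits q (b :: x) =
  dbind (dflip q) (fun fl => dbind (flipbits q x) (fun y => dret R (addb b fl :: y))).
Proof. by []. Qed.

Lemma nneg_flip (q : R) (x : bitstr) : 0 <= q <= 1 -> nneg (flipbits q x).
Proof.
move=> hq; elim: x => [|b x IH]; first exact: nneg_ret.
apply: nneg_bind; first exact: nneg_flip1.
apply: dall_all => fl; apply: nneg_bind => //.
by apply: dall_all => y; apply: nneg_ret.
Qed.

Lemma mass_flip (q : R) (x : bitstr) : mass (flipbits q x) = 1.
Proof.
elim: x => [|b x IH]; first exact: mass_ret.
apply: mass_bind1; first exact: mass_flip1.
apply: dall_all => fl; apply/eqP; apply: mass_bind1 => //.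
by apply: dall_all => y; rewrite mass_ret.
Qed.

Lemma size_flip (q : R) (x : bitstr) : dall (flipbits q x) (fun y => size y == size x).
Proof.
elim: x => [|b x IH]; first exact: dall_ret.
rewrite flipbits_cons; apply: dall_bind; apply: dall_all => fl; apply: dall_bind.
refine (dall_impl IH _) => y /eqP e; apply: dall_ret; by rewrite /= e.
Qed.

Lemma flip_bound (q : R) (x : bitstr) : 0 <= q <= 1 ->
  dexp (flipbits q x) (fun y => 2^+ones y) <= 2^+ones x * (1+q)^+size x.
Proof.
move=> hq; have /andP[q0 q1] := hq.
elim: x => [|b x IH]; first by rewrite dexp_ret /ones /= !expr0 mulr1.
rewrite flipbits_cons.
rewrite dexp_bind dexp_flip !dexp_bind.
have E fl : dexp (flipbits q x) (fun y => dexp (dret R (addb b fl :: y)) (fun y => 2 ^+ ones y))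
   = 2 ^+ (addb b fl) * dexp (flipbits q x) (fun y => 2^+ones y).
  rewrite -dexp_scale; apply: eq_bigr => y _; rewrite dexp_ret /ones /= exprD //.
rewrite !E; set E0 := dexp _ _ in IH *.
have E00 : 0 <= E0 by apply: dexp_ge0; [exact: nneg_flip | apply: dall_all => y; exact: exprn_ge0].
rewrite /ones /= -/(ones x) exprS exprD.
set A := 2 ^+ ones x in IH *; set B := (1 + q) ^+ size x in IH *.
have A0 : 0 <= A by exact: exprn_ge0.
have B0 : 0 <= B by apply: exprn_ge0; lra.
have AB0 : 0 <= A * B by exact: mulr_ge0.
have h1 : 0 <= q * E0 by exact: mulr_ge0.
have h2 : 0 <= q * (A * B) by exact: mulr_ge0.
have h3 : q * E0 <= q * (A * B) by exact: ler_wpM2l.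
clearbody A B E0; clear E; case: b => /=; rewrite ?expr0 ?expr1.
- have -> : 2 * A * ((1 + q) * B) = 2 * (A * B) + 2 * (q * (A * B)) by ring.
  have -> : q * (1 * E0) + (1 - q) * (2 * E0) = 2 * E0 - q * E0 by ring.
  lra.
- have -> : 1 * A * ((1 + q) * B) = (A * B) + (q * (A * B)) by ring.
  have -> : q * (2 * E0) + (1 - q) * (1 * E0) = E0 + q * E0 by ring.
  lra.
Qed.

Lemma nneg_diid T k (d : dist R T) : nneg d -> nneg (diid k d).
Proof.
move=> n; elim: k => [|k IH]; first exact: nneg_ret.
rewrite [diid _ _]/=.
apply: nneg_bind; first exact: n.
apply: dall_all => x; apply: nneg_bind; first exact: IH.
by apply: dall_all => s; apply: nneg_ret.
Qed.

Lemma mass_diid T k (d : dist R T) : mass d = 1 -> mass (diid k d) = 1.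
Proof.
move=> m; elim: k => [|k IH]; first exact: mass_ret.
rewrite [diid _ _]/=.
apply: mass_bind1; first exact: m.
apply: dall_all => x; apply/eqP; apply: mass_bind1; first exact: IH.
by apply: dall_all => s; rewrite mass_ret.
Qed.

Lemma dall_diid T k (d : dist R T) (P : T -> bool) :
  dall d P -> dall (diid k d) (fun s => all P s && (size s == k)).
Proof.
move=> a; elim: k => [|k IH]; first exact: dall_ret.
rewrite [diid _ _]/=.
apply: dall_bind; refine (dall_impl a _) => x Px; apply: dall_bind.
refine (dall_impl IH _) => s /andP[a1 /eqP e]; apply: dall_ret.
by rewrite /= Px a1 e eqxx.
Qed.

Lemma dexp_diid T k (d : dist R T) g : mass d = 1 ->
  dexp (diid k d) (fun s => \sum_(y <- s) g y) = k%:R * dexp d g.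
Proof.
move=> m; elim: k => [|k IH]; first by rewrite dexp_ret big_nil mul0r.
rewrite [diid _ _]/=.
rewrite dexp_bind.
transitivity (dexp d (fun x => g x + k%:R * dexp d g)).
  apply: eq_bigr => x _; congr (_ * _); rewrite dexp_bind.
  transitivity (dexp (diid k d) (fun s => g x.1 + \sum_(y <- s) g y)).
    by apply: eq_bigr => s _; rewrite dexp_ret big_cons.
  by rewrite dexp_add dexp_const mass_diid // mulr1 IH.
by rewrite dexp_add dexp_const m mulr1 -nat1r mulrDl mul1r.
Qed.

End Flip.

Lemma foldr_minn_mem (y : nat) s : foldr minn y s \in y :: s.
Proof.
elim: s => [|z s IH] /=; first by rewrite inE.
rewrite /minn; case: ifP => _; first by rewrite !inE eqxx orbT.
move: IH; rewrite !inE => /orP[->|->] //; by rewrite !orbT.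
Qed.

Lemma minseq_mem (s : seq nat) : (0 < size s)%N -> minseq s \in s.
Proof.
case: s => [|x s] // _; rewrite /minseq /=.
have := foldr_minn_mem x s; rewrite !inE => /orP[/eqP->|h].
  by rewrite /minn; case: ifP => _; rewrite eqxx.
rewrite /minn; case: ifP => _; first by rewrite eqxx.
by rewrite h orbT.
Qed.

Section Niche.
Variable R : realType.

Lemma foldr_min_mem (y : R) s : foldr Num.min y s \in y :: s.
Proof.
elim: s => [|z s IH] /=; first by rewrite inE.
rewrite minElt; case: ifP => _; first by rewrite !inE eqxx orbT.
move: IH; rewrite !inE => /orP[->|->] //; by rewrite !orbT.
Qed.

Lemma minR_mem (s : seq R) : (0 < size s)%N -> minR s \in s.
Proof.
case: s => [|x s] // _; rewrite /minR /=.
have := foldr_min_mem x s; rewrite !inE => /orP[/eqP->|h].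
  by rewrite minElt; case: ifP => _; rewrite eqxx.
rewrite minElt; case: ifP => _; first by rewrite eqxx.
by rewrite h orbT.
Qed.

Lemma size_filter_gt0 (T : eqType) (a : pred T) s x : x \in s -> a x -> (0 < size (filter a s))%N.
Proof. by move=> xs ax; rewrite size_filter -has_count; apply/hasP; exists x. Qed.

Lemma niche_mass mu p (fn : nat -> vec R) before Fstar fuel act sel :
  (mass (niche mu p fn before Fstar fuel act sel) == 1) &&
  nneg (niche mu p fn before Fstar fuel act sel).
Proof.
elim: fuel act sel => [|f IH] act sel; first by rewrite mass_ret eqxx nneg_ret.
rewrite [niche _ _ _ _ _ f.+1 _ _]/=.
case: ifP => _; first by rewrite mass_ret eqxx nneg_ret.
case: act => [|a0 act]; first by rewrite mass_ret eqxx nneg_ret.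
set rho := fun a => count _ _.
have hc : (0 < size [seq a <- a0 :: act | rho a == minseq [seq rho i | i <- a0 :: act]])%N.
  have := minseq_mem (s := [seq rho i | i <- a0 :: act]) isT.
  case/mapP => a ain ae; apply: (size_filter_gt0 ain); by rewrite -ae.
apply/andP; split.
  apply/eqP; apply: mass_bind1; first exact: mass_unif.
  apply: dall_all => a.
  case E: [seq i <- Fstar | _] => [|i0 C0]; first by case/andP: (IH (rem a (a0 :: act)) sel).
  apply/eqP; apply: mass_bind1.
    apply: mass_unif.
    have := minR_mem (s := [seq dist2_pt (fn i) (refpt R p a) | i <- i0 :: C0]) isT.
    case/mapP => i iin ie; apply: (size_filter_gt0 iin); by rewrite -ie.
  by apply: dall_all => i; case/andP: (IH (a0 :: act) (rcons sel i)).
apply: nneg_bind; first exact: nneg_unif.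
apply: dall_all => a.
case E: [seq i <- Fstar | _] => [|i0 C0]; first by case/andP: (IH (rem a (a0 :: act)) sel).
apply: nneg_bind; first exact: nneg_unif.
by apply: dall_all => i; case/andP: (IH (a0 :: act) (rcons sel i)).
Qed.

End Niche.

Section Niche2.
Variable R : realType.

Lemma assoc_le p (v : vec R) : (assoc p v <= p)%N.
Proof.
rewrite /assoc.
set F := fun best a => _.
have H : forall s b, (b <= p)%N -> all (fun a => a <= p)%N s -> (foldl F b s <= p)%N.
  elim=> [|a s IH] b hb; first by move=> _.
  move=> /= /andP[ha hs].
  by apply: IH => //; rewrite /F; case: ifP.
apply: H => //; apply/allP => a; rewrite mem_iota; lia.
Qed.

Lemma niche_good mu p (fn : nat -> vec R) Fstar fuel act sel :
  uniq Fstar -> (mu <= size Fstar)%N ->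
  uniq sel -> all (fun i => i \in Fstar) sel -> (size sel <= mu)%N ->
  (forall i, i \in Fstar -> i \notin sel -> assoc p (fn i) \in act) ->
  (size act + (size Fstar - size sel) < fuel)%N ->
  dall (niche mu p fn [::] Fstar fuel act sel)
       (fun s => uniq s && all (fun i => i \in Fstar) s && (size s == mu)).
Proof.
move=> uF muF.
elim: fuel act sel => [|f IH] act sel us aS sm cov meas; first by [].
rewrite [niche _ _ _ _ _ f.+1 _ _]/=.
case: ifP => hmu.
  by apply: dall_ret; rewrite us aS eqn_leq sm /=; rewrite add0n in hmu.
rewrite add0n in hmu.
case: act cov meas => [|a0 act] cov meas.
  exfalso; have sub : {subset Fstar <= sel}.
    by move=> i iF; apply/negPn/negP => /(cov i iF).
  have h2 := uniq_leq_size uF sub; move/negbT: hmu; rewrite -ltnNge => h1.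
  by have := leq_trans muF h2; rewrite leqNgt h1.
apply: dall_bind; apply: dall_unif; apply/allP => a.
rewrite mem_filter => /andP[_ ain].
case E: [seq i <- Fstar | _] => [|i0 C0].
  apply: IH => //.
    move=> i iF isel; have := cov i iF isel => hi.
    apply: rem_mem => //; apply/negP => /eqP ea.
    have : i \in [seq i <- Fstar | (i \notin sel) && (assoc p (fn i) == a)].
      by rewrite mem_filter isel ea eqxx iF.
    by rewrite E.
  rewrite size_rem //=; move: meas => /=; lia.
apply: dall_bind; apply: dall_unif; apply/allP => i.
rewrite mem_filter => /andP[_ iC]; move: iC; rewrite -E mem_filter.
case/andP=> /andP[isel _] iF.
apply: IH.
- by rewrite rcons_uniq isel us.
- by rewrite all_rcons iF aS.
- by rewrite size_rcons; move/negbT: hmu; rewrite -ltnNge.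
- move=> j jF; rewrite mem_rcons inE negb_or => /andP[_ js]; exact: cov.
- rewrite size_rcons; move/negbT: hmu; rewrite -ltnNge; move: meas muF; move: (size (a0 :: act)) (size Fstar) (size sel) => x y z; lia.
Qed.

End Niche2.

Lemma ones_zeros (y : bitstr) : (ones y + zeros y)%N = size y.
Proof. by rewrite /ones /zeros -(count_predC id y). Qed.

Lemma nondom_all (Rt : seq bitstr) n S : all (fun y => size y == n) Rt ->
  all (fun i => i < size Rt)%N S -> nondom Rt S = S.
Proof.
move=> hR hS; apply/all_filterP; apply/allP => i iS; apply/hasPn => j jS.
have hi := allP hS i iS; have hj := allP hS j jS.
have /eqP si := allP hR _ (mem_nth [::] hi).
have /eqP sj := allP hR _ (mem_nth [::] hj).
have ei := ones_zeros (nth [::] Rt i); have ej := ones_zeros (nth [::] Rt j).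
rewrite /dominates /omm2 /=; apply/negP => /and3P[h1 h2 h3]; move: h1 h2 h3 ei ej si sj.
move: (ones (nth [::] Rt i)) (zeros (nth [::] Rt i)) (ones (nth [::] Rt j)).
move: (zeros (nth [::] Rt j)) (size (nth [::] Rt i)) (size (nth [::] Rt j)).
move=> a b c d e f; clear; lia.
Qed.

Lemma fronts_eq (Rt : seq bitstr) n : all (fun y => size y == n) Rt ->
  (0 < size Rt)%N -> fronts Rt = [:: iota 0 (size Rt)].
Proof.
move=> hR; rewrite /fronts; case E: (size Rt) => [|m] // _.
have -> : fronts_aux Rt m.+1 (iota 0 m.+1) = nondom Rt (iota 0 m.+1) ::
   fronts_aux Rt m [seq i <- iota 0 m.+1 | i \notin nondom Rt (iota 0 m.+1)] by [].
rewrite (nondom_all hR); last by apply/allP => i; rewrite mem_iota E; lia.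
rewrite (eq_in_filter (a2 := pred0)); last by move=> i ->.
by rewrite filter_pred0; case: m {E}.
Qed.

Section Surv.
Variable R : realType.

Definition phi (P : seq bitstr) : R := \sum_(y <- P) 2 ^+ ones y.

Lemma phi_ge0 P : 0 <= phi P.
Proof. by apply: sumr_ge0 => y _; apply: exprn_ge0. Qed.

Lemma sum_sub (F : nat -> R) (s1 s2 : seq nat) : uniq s1 -> {subset s1 <= s2} ->
  (forall i, 0 <= F i) -> \sum_(i <- s1) F i <= \sum_(i <- s2) F i.
Proof.
move=> + + F0; elim: s1 s2 => [|x s1 IH] s2; first by rewrite big_nil => _ _; apply: sumr_ge0.
move=> /= /andP[xs1 u1] sub.
have xs2 : x \in s2 by apply: sub; rewrite inE eqxx.
rewrite big_cons (big_rem x xs2) /= lerD2l; apply: IH => // y ys.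
apply: rem_mem; first by apply/eqP => e; move: xs1; rewrite -e ys.
by apply: sub; rewrite inE ys orbT.
Qed.

Lemma survival_props mu p (nad : seq (seq bitstr) -> vec R) hist (Rt : seq bitstr) n :
  all (fun y => size y == n) Rt -> (0 < mu)%N -> (mu <= size Rt)%N ->
  [/\ mass (survival mu p nad hist Rt) = 1, nneg (survival mu p nad hist Rt) &
      dall (survival mu p nad hist Rt)
        (fun P' => (size P' == mu) && all (fun y => size y == n) P' && (phi P' <= phi Rt))].
Proof.
move=> hR mu0 muR.
have sR : (0 < size Rt)%N by apply: leq_trans muR.
rewrite /survival (fronts_eq hR sR).
have -> : split_fronts mu [:: iota 0 (size Rt)] = ([::], iota 0 (size Rt)).
  by rewrite /= size_iota muR.
set fn := (fun i : nat => _).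
set N := niche _ _ _ _ _ _ _ _.
have /andP[/eqP mN nN] : (mass N == 1) && nneg N := niche_mass _ _ _ _ _ _ _ _.
have gN : dall N (fun s => uniq s && all (fun i => i \in iota 0 (size Rt)) s && (size s == mu)).
  apply: niche_good => //.
  - exact: iota_uniq.
  - by rewrite size_iota.
  - by move=> i _ _; rewrite mem_iota add0n ltnS assoc_le.
  - rewrite /= !size_iota subn0; lia.
split.
- apply: mass_bind1 => //; apply: dall_all => s; by rewrite mass_ret.
- apply: nneg_bind => //; apply: dall_all => s; exact: nneg_ret.
apply: dall_bind; refine (dall_impl gN _) => s /andP[/andP[us aS] /eqP ss].
apply: dall_ret; rewrite [([::], _).1]/= cat0s size_map ss eqxx /=.
apply/andP; split.
  rewrite all_map; apply/allP => i /(allP aS); rewrite mem_iota add0n => hi /=.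
  exact: (allP hR _ (mem_nth [::] hi)).
rewrite /phi big_map -{2}(mkseq_nth [::] Rt) /mkseq big_map.
apply: (sum_sub (F := fun i => 2 ^+ ones (nth [::] Rt i))) => //.
  by move=> i /(allP aS).
by move=> i; apply: exprn_ge0.
Qed.

End Surv.

Section Gen2.
Variable R : realType.

Lemma q_ok n : (0 < n)%N -> 0 <= (n%:R : R)^-1 <= 1.
Proof.
move=> n0; rewrite invr_ge0 ler0n /= invf_le1 ?ltr0n //.
by rewrite ler1n.
Qed.

Lemma mut_bound n (x : bitstr) : (0 < n)%N -> size x = n ->
  dexp (mutate R n x) (fun y => 2^+ones y) <= expR 1 * 2^+ones x.
Proof.
move=> n0 sx; rewrite /mutate.
apply: le_trans (flip_bound x (q_ok n0)) _.
rewrite [X in _ <= X]mulrC; apply: ler_wpM2l; first exact: exprn_ge0.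
rewrite sx.
have h : 1 + (n%:R : R)^-1 <= expR (n%:R^-1) := expR_ge1Dx _.
apply: le_trans (_ : expR (n%:R^-1) ^+ n <= _).
  apply: lerXn2r => //; rewrite nnegrE.
    by apply: addr_ge0 => //; rewrite invr_ge0 ler0n.
  by apply: ltW; apply: expR_gt0.
by rewrite -expRM_natl mulfV // pnatr_eq0 -lt0n.
Qed.

Definition Dm n (P : seq bitstr) : dist R bitstr := dbind (dunif R P) (fun x => mutate R n x).

Lemma Dm_props n P : (0 < n)%N -> (0 < size P)%N -> all (fun y => size y == n) P ->
  [/\ mass (Dm n P) = 1, nneg (Dm n P), dall (Dm n P) (fun y => size y == n) &
      (size P)%:R * dexp (Dm n P) (fun y => 2^+ones y) <= expR 1 * phi R P].
Proof.
move=> n0 sP hP; split.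
- apply: mass_bind1; first exact: mass_unif.
  by apply: dall_all => x; rewrite mass_flip.
- apply: nneg_bind; first exact: nneg_unif.
  by apply: dall_all => x; apply: nneg_flip; apply: q_ok.
- apply: dall_bind; apply: dall_unif; apply: sub_all hP => x /eqP sx.
  by refine (dall_impl (size_flip _ x) _) => y /eqP ->; rewrite sx.
rewrite dexp_bind dexp_unif mulrA mulfV ?pnatr_eq0 -?lt0n // mul1r.
rewrite /phi mulr_sumr !big_seq; apply: ler_sum => x xP.
apply: mut_bound => //; exact/eqP/(allP hP).
Qed.

Lemma gen_props n mu p nad hist (P : seq bitstr) :
  (0 < n)%N -> (0 < mu)%N -> size P = mu -> all (fun y => size y == n) P ->
  [/\ mass (generation n mu p nad hist P) = 1, nneg (generation n mu p nad hist P),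
      dall (generation n mu p nad hist P) (fun RP => (size RP.2 == mu) && all (fun y => size y == n) RP.2) &
      dexp (generation n mu p nad hist P) (fun RP => phi R RP.2) <= (1 + expR 1) * phi R P].
Proof.
move=> n0 mu0 sP hP.
have sP0 : (0 < size P)%N by rewrite sP.
have [mD nD dD eD] := Dm_props n0 sP0 hP.
have dI := dall_diid mu dD.
have HS : forall Q, all (fun y => size y == n) Q && (size Q == mu) ->
  [/\ mass (survival mu p nad hist (P ++ Q)) = 1, nneg (survival mu p nad hist (P ++ Q)) &
      dall (survival mu p nad hist (P ++ Q))
        (fun P' => (size P' == mu) && all (fun y => size y == n) P' && (phi R P' <= phi R (P ++ Q)))].
  move=> Q /andP[aQ /eqP sQ]; apply: survival_props => //.
    by rewrite all_cat hP aQ.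
  by rewrite size_cat sP leq_addr.
rewrite /generation -/(Dm n P); split.
- apply: mass_bind1; first exact: mass_diid.
  refine (dall_impl dI _) => Q /HS [m1 n1 d1]; apply/eqP; apply: mass_bind1 => //.
  by apply: dall_all => s; rewrite mass_ret.
- apply: nneg_bind; first exact: nneg_diid.
  refine (dall_impl dI _) => Q /HS [m1 n1 d1]; apply: nneg_bind => //.
  by apply: dall_all => s; apply: nneg_ret.
- apply: dall_bind; refine (dall_impl dI _) => Q /HS [m1 n1 d1]; apply: dall_bind.
  by refine (dall_impl d1 _) => s /andP[h _]; apply: dall_ret.
rewrite dexp_bind.
apply: le_trans (_ : dexp (diid mu (Dm n P)) (fun Q => phi R P + phi R Q) <= _).
  apply: dexp_le; first exact: nneg_diid.
  refine (dall_impl dI _) => Q /HS [m1 n1 d1]; rewrite dexp_bind.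
  apply: le_trans (_ : dexp (survival mu p nad hist (P ++ Q)) (fun _ => phi R (P ++ Q)) <= _).
    apply: dexp_le => //; refine (dall_impl d1 _) => s /andP[_ h]; by rewrite dexp_ret.
  by rewrite dexp_const m1 mulr1 /phi big_cat.
rewrite dexp_add dexp_const mass_diid // mulr1 dexp_diid // -sP mulrDl mul1r lerD2l.
exact: eD.
Qed.

End Gen2.

Section Run.
Variable R : realType.

Definition Psi (tr : seq (seq bitstr)) : R := \sum_(Q <- tr) phi R Q.
Definition HH : R := 2 + expR 1.

Lemma HH_ge1 : 1 <= HH.
Proof. rewrite /HH; have := expR_gt0 (1 : R); lra. Qed.

Lemma run_props n mu p nad T hist (P : seq bitstr) :
  (0 < n)%N -> (0 < mu)%N -> size P = mu -> all (fun y => size y == n) P ->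
  [/\ mass (run_aux n mu p nad T hist P) = 1, nneg (run_aux n mu p nad T hist P) &
      dexp (run_aux n mu p nad T hist P) (fun tr => phi R P + Psi tr) <= phi R P * HH ^+ T].
Proof.
move=> n0 mu0; elim: T hist P => [|T IH] hist P sP hP.
  rewrite [run_aux _ _ _ _ 0 _ _]/=; split; [exact: mass_ret | exact: nneg_ret |].
  by rewrite dexp_ret /Psi big_nil addr0 expr0 mulr1.
have [mG nG dG eG] := gen_props p nad hist n0 mu0 sP hP.
have HT : forall RP : seq bitstr * seq bitstr, (size RP.2 == mu) && all (fun y => size y == n) RP.2 ->
  [/\ mass (run_aux n mu p nad T (rcons hist RP.1) RP.2) = 1, nneg (run_aux n mu p nad T (rcons hist RP.1) RP.2) &
      dexp (run_aux n mu p nad T (rcons hist RP.1) RP.2) (fun tr => phi R RP.2 + Psi tr) <= phi R RP.2 * HH ^+ T].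
  by move=> RP /andP[/eqP s a]; apply: IH.
rewrite [run_aux _ _ _ _ T.+1 _ _]/=; split.
- apply: mass_bind1 => //; refine (dall_impl dG _) => RP /HT [m1 n1 e1].
  by apply/eqP; apply: mass_bind1 => //; apply: dall_all => tr; rewrite mass_ret.
- apply: nneg_bind => //; refine (dall_impl dG _) => RP /HT [m1 n1 e1].
  by apply: nneg_bind => //; apply: dall_all => tr; apply: nneg_ret.
rewrite dexp_bind.
apply: le_trans (_ : dexp (generation n mu p nad hist P) (fun RP => phi R P + HH ^+ T * phi R RP.2) <= _).
  apply: dexp_le => //; refine (dall_impl dG _) => RP /HT [m1 n1 e1].
  rewrite dexp_bind.
  have -> : dexp (run_aux n mu p nad T (rcons hist RP.1) RP.2)
      (fun x => dexp (dret R (RP.2 :: x)) (fun tr => phi R P + Psi tr))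
    = phi R P + dexp (run_aux n mu p nad T (rcons hist RP.1) RP.2) (fun tr => phi R RP.2 + Psi tr).
    transitivity (dexp (run_aux n mu p nad T (rcons hist RP.1) RP.2)
       (fun tr => phi R P + (phi R RP.2 + Psi tr))).
      by apply: eq_bigr => tr _; rewrite dexp_ret /Psi big_cons.
    by rewrite dexp_add dexp_const m1 mulr1.
  by rewrite lerD2l mulrC.
rewrite dexp_add dexp_const mG mulr1 dexp_scale.
have eG' : HH ^+ T * dexp (generation n mu p nad hist P) (fun RP => phi R RP.2)
   <= HH ^+ T * ((1 + expR 1) * phi R P).
  by apply: ler_wpM2l => //; apply: exprn_ge0; have := HH_ge1; lra.
apply: le_trans (lerD (lexx _) eG') _.
have h1 : 1 <= HH ^+ T by apply: exprn_ege1; exact: HH_ge1.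
have h2 := phi_ge0 R P.
rewrite exprSr /HH.
have h3 : phi R P <= phi R P * (2 + expR 1) ^+ T by rewrite -{1}[phi R P]mulr1 ler_wpM2l.
move: h3; rewrite /HH in h1 *; set A := (2 + expR 1) ^+ T; set B := phi R P.
set E := expR 1; clearbody A B E => h3.
have -> : B * (A * (2 + E)) = B * A + A * ((1 + E) * B) by ring.
lra.
Qed.

End Run.

Section Final.
Variable R : realType.

Lemma half_ok : 0 <= (2 : R)^-1 <= 1.
Proof. by apply/andP; split; [rewrite invr_ge0 | rewrite invf_le1 ?ler1n]. Qed.

Lemma unif_props n : [/\ mass (unif_bitstr R n) = 1, nneg (unif_bitstr R n),
  dall (unif_bitstr R n) (fun y => size y == n) &
  dexp (unif_bitstr R n) (fun y => 2^+ones y) <= (1 + 2^-1)^+n].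
Proof.
split; rewrite /unif_bitstr.
- exact: mass_flip.
- exact: nneg_flip half_ok.
- by refine (dall_impl (size_flip _ _) _) => y; rewrite size_nseq.
apply: le_trans (flip_bound _ half_ok) _.
by rewrite /ones count_nseq /= mul0n expr0 mul1r size_nseq.
Qed.

Lemma Psi_ge0 tr : 0 <= Psi R tr.
Proof. by apply: sumr_ge0 => Q _; apply: phi_ge0. Qed.

Lemma nsga_props n mu p nad T : (0 < n)%N -> (0 < mu)%N ->
  [/\ mass (nsga3_run n mu p nad T) = 1, nneg (nsga3_run n mu p nad T) &
      dexp (nsga3_run n mu p nad T) (@Psi R) <= mu%:R * (1 + 2^-1)^+n * HH R ^+ T].
Proof.
move=> n0 mu0.
have [mU nU dU eU] := unif_props n.
have dI := dall_diid mu dU.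
have HT : forall P0 : seq bitstr, all (fun y => size y == n) P0 && (size P0 == mu) ->
  [/\ mass (run_aux n mu p nad T [::] P0) = 1, nneg (run_aux n mu p nad T [::] P0) &
      dexp (run_aux n mu p nad T [::] P0) (fun tr => phi R P0 + Psi R tr) <= phi R P0 * HH R ^+ T].
  by move=> P0 /andP[a /eqP s]; apply: run_props.
rewrite /nsga3_run; split.
- apply: mass_bind1; first exact: mass_diid.
  refine (dall_impl dI _) => P0 /HT [m1 n1 e1].
  by apply/eqP; apply: mass_bind1 => //; apply: dall_all => tr; rewrite mass_ret.
- apply: nneg_bind; first exact: nneg_diid.
  refine (dall_impl dI _) => P0 /HT [m1 n1 e1].
  by apply: nneg_bind => //; apply: dall_all => tr; apply: nneg_ret.
rewrite dexp_bind.
apply: le_trans (_ : dexp (diid mu (unif_bitstr R n)) (fun P0 => HH R ^+ T * phi R P0) <= _).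
  apply: dexp_le; first exact: nneg_diid.
  refine (dall_impl dI _) => P0 /HT [m1 n1 e1].
  rewrite dexp_bind mulrC; apply: le_trans e1.
  by apply: dexp_le => //; apply: dall_all => tr; rewrite dexp_ret /Psi big_cons lexx.
rewrite dexp_scale dexp_diid // mulrC; apply: ler_wpM2r.
  by apply: exprn_ge0; have := HH_ge1 R; lra.
by apply: ler_wpM2l => //; exact: ler0n.
Qed.

Definition theta (n : nat) : R := expR ((3 * n)%:R / 4%:R * ln 2).

Lemma le_sum_mem (T : eqType) (F : T -> R) s x : x \in s -> (forall z, 0 <= F z) ->
  F x <= \sum_(z <- s) F z.
Proof.
move=> xs F0; rewrite (big_rem x xs) /= lerDl; exact: sumr_ge0.
Qed.

Lemma high_psi n tr : ~~ no_high n tr -> theta n <= Psi R tr.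
Proof.
case/allPn => P Ptr /allPn [y yP]; rewrite -leqNgt => hy.
apply: le_trans (_ : 2 ^+ ones y <= _).
  have -> : (2 : R) ^+ ones y = expR ((ones y)%:R * ln 2).
    by rewrite expRM_natl lnK // posrE.
  rewrite /theta ler_expR ler_wpM2r ?ln_ge0 ?ler1n //.
  rewrite ler_pdivrMr ?ltr0n // -natrM ler_nat; move: hy; move: (ones y) => k; lia.
apply: le_trans (_ : phi R P <= _).
  apply: (le_sum_mem (F := fun y => 2 ^+ ones y)) => // z; exact: exprn_ge0.
apply: (le_sum_mem (F := phi R)) => // z; exact: phi_ge0.
Qed.

Lemma theta_gt0 n : 0 < theta n.
Proof. exact: expR_gt0. Qed.

Lemma final_bound n mu p nad T : (0 < n)%N -> (0 < mu)%N ->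
  1 - (theta n)^-1 * (mu%:R * (1 + 2^-1)^+n * HH R ^+ T)
    <= dprob (nsga3_run n mu p nad T) (no_high n).
Proof.
move=> n0 mu0; have [m nn e] := nsga_props p nad T n0 mu0.
set d := nsga3_run n mu p nad T in m nn e *.
rewrite dprobE.
have sum1 : dexp d (fun tr => if no_high n tr then 1 else 0)
          + dexp d (fun tr => if no_high n tr then 0 else 1) = 1.
  rewrite -dexp_add -[RHS]mulr1 -m -dexp_const; apply: eq_bigr => tr _.
  by case: (no_high n tr.1); rewrite ?addr0 ?add0r.
have le1 : dexp d (fun tr => if no_high n tr then 0 else 1) <= (theta n)^-1 * dexp d (@Psi R).
  rewrite -dexp_scale; apply: dexp_le => //; apply: dall_all => tr.
  case E: (no_high n tr).
    by apply: mulr_ge0; [rewrite invr_ge0 ltW // theta_gt0 | exact: Psi_ge0].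
  rewrite -(mulVf (lt0r_neq0 (theta_gt0 n))); apply: ler_wpM2l.
    by rewrite invr_ge0 ltW // theta_gt0.
  by apply: high_psi; rewrite E.
have le2 : (theta n)^-1 * dexp d (@Psi R) <= (theta n)^-1 * (mu%:R * (1 + 2^-1)^+n * HH R ^+ T).
  by apply: ler_wpM2l => //; rewrite invr_ge0 ltW // theta_gt0.
move: sum1 le1 le2; set a := dexp d _; set b := dexp d _; set c := _ * dexp d _.
set k := _ * (_ * _ * _). clearbody a b c k; lra.
Qed.

End Final.

Section Asym.
Variable R : realType.

Lemma exists_nat_ge (x : R) : exists N : nat, x <= N%:R.
Proof.
exists (Num.Def.archi_bound `|x|); apply: le_trans (ler_norm x) _.
exact/ltW/archi_boundP.
Qed.

Lemma pow_expR (x : R) j : 0 < x -> x ^+ j = expR (j%:R * ln x).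
Proof. by move=> x0; rewrite expRM_natl lnK. Qed.

Definition alpha : R := 3%:R / 4%:R * ln 2 - ln (1 + 2^-1).

Lemma alpha_gt0 : 0 < alpha.
Proof.
rewrite /alpha subr_gt0.
have h32 : (0 : R) < 1 + 2^-1 by rewrite addr_gt0 // invr_gt0.
have h1 : ln ((1 + 2^-1) ^+ 4) < ln ((2 : R) ^+ 3).
  rewrite ltr_ln ?posrE ?exprn_gt0 //.
  have -> : (1 + 2^-1 : R) ^+ 4 = 81%:R / 16%:R.
    by rewrite !exprS expr0; field.
  by rewrite ltr_pdivrMr ?ltr0n // -natrX -natrM ltr_nat.
have h2 : (0 : R) < 2 by [].
move: h1; rewrite (lnXn 4 h32) (lnXn 3 h2).
rewrite -[_ *+ 4]mulr_natl -[_ *+ 3]mulr_natl => h1.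
have -> : 3%:R / 4%:R * ln (2 : R) = (3%:R * ln 2) / 4%:R by rewrite mulrAC.
rewrite ltr_pdivlMr ?ltr0n //; move: h1; set a := ln _; set b := ln _.
clearbody a b; lra.
Qed.

Lemma HH_gt1 : 1 < HH R.
Proof. rewrite /HH; have := expR_gt0 (1 : R); lra. Qed.

Lemma key (c delta : R) (C k : nat) : 0 < c -> 0 < delta -> (0 < C)%N ->
  exists N : nat, forall n : nat, (N <= n)%N -> (0 < n)%N /\
  forall T : nat, T%:R <= c * n%:R / ln (n%:R : R) ->
    C%:R * (n.+1)%:R ^+ k * (1 + 2^-1) ^+ n * HH R ^+ T <= delta * theta R n.
Proof.
move=> c0 d0 C0.
have a0 := alpha_gt0.
have lH0 : 0 < ln (HH R) by apply: ln_gt0; exact: HH_gt1.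
set M := 3%:R * c * ln (HH R) / alpha.
have M0 : 0 < M by rewrite /M !mulr_gt0 ?invr_gt0 ?ltr0n.
set m := 6%:R * (k%:R + 1) / alpha.
have m0 : 0 < m by rewrite /m; apply: divr_gt0 => //; have := ler0n R k; lra.
have [N1 hN1] := exists_nat_ge (expR M).
have [N2 hN2] := exists_nat_ge (6%:R * `|k%:R * ln m| / alpha + 1).
have [N3 hN3] := exists_nat_ge (3%:R * `|ln (C%:R : R) - ln delta| / alpha).
exists (maxn 1 (maxn N1 (maxn N2 N3))) => n.
rewrite !geq_max => /and4P[n1 hn1 hn2 hn3]; split => // T hT.
have x0 : (0 : R) < n%:R by rewrite ltr0n.
have hx1 : expR M <= n%:R by apply: le_trans hN1 _; rewrite ler_nat.
have hx2 : 6%:R * `|k%:R * ln m| / alpha + 1 <= n%:R by apply: le_trans hN2 _; rewrite ler_nat.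
have hx3 : 3%:R * `|ln (C%:R : R) - ln delta| / alpha <= n%:R by apply: le_trans hN3 _; rewrite ler_nat.
have ha : ln (C%:R : R) - ln delta <= alpha * n%:R / 3%:R.
  rewrite ler_pdivlMr ?ltr0n //; move: hx3; rewrite ler_pdivrMr // => h.
  have := ler_norm (ln (C%:R : R) - ln delta); move: h.
  set u := `|_|; set v := ln _ - _; clearbody u v; lra.
have hb : k%:R * ln ((n.+1)%:R : R) <= alpha * n%:R / 3%:R.
  have hS1 : (0 : R) < (n.+1)%:R by rewrite ltr0n.
  have e : ln ((n.+1)%:R : R) = ln m + ln ((n.+1)%:R / m).
    rewrite -lnM ?posrE //; last exact: divr_gt0.
    by rewrite mulrC divfK // lt0r_neq0.
  have l1 : ln ((n.+1)%:R / m) <= (n.+1)%:R / m by apply/ltW/ln_sublinear/divr_gt0.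
  have l2 : k%:R / m <= alpha / 6%:R.
    rewrite ler_pdivrMr // /m.
    have -> : alpha / 6%:R * (6%:R * (k%:R + 1) / alpha) = k%:R + 1.
      by field; exact: lt0r_neq0.
    lra.
  have l3 : k%:R * ((n.+1)%:R / m) <= alpha / 6%:R * (n.+1)%:R.
    rewrite mulrCA mulrC; apply: ler_wpM2r; [exact: ltW | exact: l2].
  have l4 : k%:R * ln ((n.+1)%:R / m) <= k%:R * ((n.+1)%:R / m) by apply: ler_wpM2l.
  have l5 : k%:R * ln m <= alpha * (n%:R - 1) / 6%:R.
    rewrite ler_pdivlMr ?ltr0n //; move: hx2; rewrite -lerBrDr ler_pdivrMr // => h.
    have := ler_norm (k%:R * ln m); move: h.
    set u := `|_|; set v := k%:R * ln m; clearbody u v; lra.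
  have l6 := le_trans l4 l3.
  rewrite e mulrDr -natr1; rewrite -natr1 in l6; move: l5 l6.
  set A := k%:R * ln m; set B := k%:R * ln _.
  clearbody A B; set x := (n%:R : R); clearbody x.
  have -> : alpha * (x - 1) / 6%:R = alpha * x * 6%:R^-1 - alpha * 6%:R^-1 by ring.
  have -> : alpha / 6%:R * (x + 1) = alpha * x * 6%:R^-1 + alpha * 6%:R^-1 by ring.
  have -> : alpha * x / 3%:R = alpha * x * 6%:R^-1 + alpha * x * 6%:R^-1.
    by field.
  lra.
have hc : T%:R * ln (HH R) <= alpha * n%:R / 3%:R.
  have lnn : M <= ln (n%:R : R).
    by rewrite -ler_expR lnK.
  have lnn0 : 0 < ln (n%:R : R) by apply: lt_le_trans lnn.
  apply: le_trans (_ : c * n%:R / ln (n%:R : R) * ln (HH R) <= _).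
    by apply: ler_wpM2r => //; exact: ltW.
  apply: le_trans (_ : c * n%:R / M * ln (HH R) <= _).
    apply: ler_wpM2r; first exact: ltW.
    apply: ler_wpM2l; first by apply: mulr_ge0; apply: ltW.
    by rewrite lef_pV2 ?posrE.
  rewrite le_eqVlt; apply/orP; left; apply/eqP; rewrite /M; field.
  by rewrite (lt0r_neq0 a0) (lt0r_neq0 lH0) (lt0r_neq0 c0).
have hS1 : (0 : R) < (n.+1)%:R by rewrite ltr0n.
have h32 : (0 : R) < 1 + 2^-1 by rewrite addr_gt0 // invr_gt0.
have hH : 0 < HH R by apply: lt_trans HH_gt1.
have eC : (C%:R : R) = expR (ln C%:R) by rewrite lnK // posrE ltr0n.
have eD : delta = expR (ln delta) by rewrite lnK.
rewrite {1}eC {1}eD (pow_expR k hS1) (pow_expR n h32) (pow_expR T hH) /theta.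
rewrite -!expRD ler_expR natrM.
move: ha hb hc; rewrite /alpha.
set x := (n%:R : R); set a := ln (C%:R : R); set b := ln delta; set e := ln ((n.+1)%:R : R).
set f := ln (1 + 2^-1 : R); set g := ln (HH R); set h := ln (2 : R); set t := (T%:R : R).
clearbody x a b e f g h t.
lra.
Qed.

End Asym.

Unset Implicit Arguments.
Set Strict Implicit.

Theorem lemma5 (R : realType) (mu p : nat -> nat) (eps_nad : nat -> R)
    (nad : nat -> seq (seq bitstr) -> R * R) (c : R) :
  (forall n : nat, (n.+1 <= mu n)%N) ->
  (exists C k : nat, forall n : nat, (mu n <= C * n.+1 ^ k)%N) ->
  (forall n : nat, n%:R <= eps_nad n) ->
  (forall n : nat, (4 : R) * Num.sqrt (2 : R) * n%:R <= (p n)%:R) ->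
  (forall (n : nat) (hist : seq (seq bitstr)),
      eps_nad n <= (nad n hist).1 /\ eps_nad n <= (nad n hist).2) ->
  0 < c ->
  forall delta : R, 0 < delta ->
  exists N : nat, forall n : nat, (N <= n)%N ->
  forall T : nat, T%:R <= c * n%:R / ln (n%:R : R) ->
    1 - delta <= dprob (nsga3_run n (mu n) (p n) (nad n) T) (no_high n).
Proof.
move=> hmu [C [k hC]] _ _ _ c0 delta d0.
have C0 : (0 < C)%N.
  have := leq_trans (hmu 0%N) (hC 0%N); rewrite exp1n muln1; by [].
have [N hN] := key (R := R) k c0 d0 C0.
exists N => n hn T hT.
have [n0 hK] := hN n hn; have hb := hK T hT.
have mu0 : (0 < mu n)%N by apply: leq_trans (hmu n).
apply: le_trans (final_bound (p n) (nad n) T n0 mu0).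
have hm : (mu n)%:R <= C%:R * (n.+1)%:R ^+ k :> R.
  by rewrite -natrX -natrM ler_nat.
have th0 := theta_gt0 R n.
set X := _ * _ * HH R ^+ T.
have Y0 : 0 <= (1 + 2^-1 : R) ^+ n * HH R ^+ T.
  apply: mulr_ge0; apply: exprn_ge0; last by have := HH_ge1 R; lra.
  by apply: addr_ge0; rewrite ?invr_ge0.
have hX : X <= delta * theta R n.
  apply: le_trans hb.
  have -> : C%:R * (n.+1)%:R ^+ k * (1 + 2^-1) ^+ n * HH R ^+ T
     = (C%:R * (n.+1)%:R ^+ k) * ((1 + 2^-1 : R) ^+ n * HH R ^+ T) by rewrite !mulrA.
  by rewrite /X -mulrA; apply: ler_wpM2r.
have : (theta R n)^-1 * X <= delta.
  by rewrite mulrC ler_pdivrMr.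
set Z := _^-1 * X; clearbody Z; lra.
Qed.
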